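(* Let $A\in{\operatorname{\mathsf{TPD}}}_n(\mathbb{S}_{\max}^\vee)$, with $\gamma_i=a_{ii}$ ordered so that $\gamma_1\succeq\cdots\succeq\gamma_n$, and assume $\gamma=\gamma_1$ is simple, i.e. $\gamma_1\succ\gamma_2$. Let $v^{(1)}=(\gamma I\ominus A)^{\mathrm{adj}}_{:,1}$. If $v^{(1)}$ does not belong to $(\mathbb{S}_{\max}^\vee)^n$, then $A$ has no strong $\mathbb{S}_{\max}$-eigenvector associated to the eigenvalue $\gamma$.
   Context: $\mathbb{S}_{\max}$ is the symmetrized tropical semiring over a divisible totally ordered abelian group, with zero $\mathbf{0}$, unit $\mathbf{1}$, minus $\ominus$; $\mathbb{S}_{\max}^\vee$ is the set of signed elements (positive, negative or $\mathbf{0}$). $a\preceq b$ iff $b=a\oplus b$; $a\succ b$ iff $b\preceq a$ and $a\ne b$. $A\in{\operatorname{\mathsf{TPD}}}_n(\mathbb{S}_{\max}^\vee)$: $A$ symmetric with signed entries, $\mathbf{0}<a_{ii}$ and $a_{ij}^2<a_{ii}a_{jj}$ for $i\ne j$ (where $a<b$ iff $b\ominus a$ is positive). Its $\mathbb{S}_{\max}$-eigenvalues are its diagonal entries. $(M^{\mathrm{adj}})_{ij}=(\ominus\mathbf{1})^{i+j}\det M[\hat j,\hat i]$ (signed determinant), $M_{:,1}$ the first column. A strong $\mathbb{S}_{\max}$-eigenvector for $\gamma$ is $v\in(\mathbb{S}_{\max}^\vee)^n\setminus\{\mathbf{0}\}$ with $Av=\gamma v$. *)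

(* Defs.v *)
From HB Require Import structures.
From mathcomp Require Import all_boot all_order all_algebra all_fingroup.
Set Implicit Arguments. Unset Strict Implicit. Unset Printing Implicit Defensive.
Import Order.TTheory GRing.Theory Num.Theory.
Local Open Scope ring_scope.

(* The value group: a (partially) ordered Z-module, required by the
   hypothesis [div_tot_ord_group] below to be a divisible totally ordered
   abelian group (the group is written additively: the tropical product of
   moduli is [+], the tropical unit modulus is [0]). *)
Definition div_tot_ord_group (G : porderZmodType) : Prop :=
  [/\ (forall x y : G, (x <= y) || (y <= x)),
      (forall x y z : G, x <= y -> x + z <= y + z) &
      (forall (x : G) (k : nat), (0 < k)%N -> exists y : G, y *+ k = x)].

(* Symmetrized tropical semiring S_max over G:
   zero, positive g (= g), negative g (= ⊖g), balanced g (= g•). *)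
Inductive smax (G : Type) : Type :=
  | SZero | SPos of G | SNeg of G | SBal of G.
Arguments SZero {G}.

Section Smax.
Variable G : porderZmodType.
Implicit Types a b : smax G.

Definition sone : smax G := SPos 0.

Definition sopp a : smax G :=
  match a with SZero => SZero | SPos g => SNeg g | SNeg g => SPos g | SBal g => SBal g end.

(* sum of two elements of the same modulus g *)
Definition sadd_eq (a b : smax G) (g : G) : smax G :=
  match a, b with
  | SPos _, SPos _ => SPos g
  | SNeg _, SNeg _ => SNeg g
  | _, _ => SBal g
  end.

Definition sadd a b : smax G :=
  match a, b with
  | SZero, _ => b
  | _, SZero => a
  | SPos x, _ | SNeg x, _ | SBal x, _ =>
    match b with
    | SZero => a
    | SPos y | SNeg y | SBal y =>
      if x < y then b else if y < x then a else sadd_eq a b x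
    end
  end.

Definition smul a b : smax G :=
  match a, b with
  | SZero, _ | _, SZero => SZero
  | SPos x, SPos y | SNeg x, SNeg y => SPos (x + y)
  | SPos x, SNeg y | SNeg x, SPos y => SNeg (x + y)
  | SBal x, SPos y | SBal x, SNeg y | SBal x, SBal y
  | SPos x, SBal y | SNeg x, SBal y => SBal (x + y)
  end.

Definition ssigned a : Prop := match a with SBal _ => False | _ => True end.
Definition spositive a : Prop := match a with SPos _ => True | _ => False end.

Definition slt a b : Prop := spositive (sadd b (sopp a)).
Definition spreceq a b : Prop := b = sadd a b.
Definition ssucc a b : Prop := spreceq b a /\ a <> b.

Definition ssignpow (k : nat) : smax G := if odd k then sopp sone else sone.

Definition sdet (n : nat) (M : 'M[smax G]_n) : smax G :=
  \big[sadd/SZero]_(s : 'S_n)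
     smul (ssignpow (odd_perm s)) (\big[smul/sone]_(i < n) M i (s i)).

(* (M^adj)_{ij} = (⊖1)^{i+j} det M[ĵ, î]  (delete row j and column i) *)
Definition sadj (n : nat) (M : 'M[smax G]_n.+1) : 'M[smax G]_n.+1 :=
  \matrix_(i, j) smul (ssignpow (i + j)%N) (sdet (row' j (col' i M))).

Definition sshift (n : nat) (g : smax G) (A : 'M[smax G]_n) : 'M[smax G]_n :=
  \matrix_(i, j) sadd (if i == j then g else SZero) (sopp (A i j)).

Definition TPD (n : nat) (A : 'M[smax G]_n) : Prop :=
  [/\ forall i j, A i j = A j i,
      forall i j, ssigned (A i j),
      forall i, slt SZero (A i i) &
      forall i j, i != j -> slt (smul (A i j) (A i j)) (smul (A i i) (A j j))].

Definition smulmxv (n : nat) (A : 'M[smax G]_n) (v : 'I_n -> smax G) : 'I_n -> smax G :=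
  fun i => \big[sadd/SZero]_(j < n) smul (A i j) (v j).

Definition strong_eigenvector (n : nat) (A : 'M[smax G]_n) (g : smax G)
    (v : 'I_n -> smax G) : Prop :=
  [/\ forall i, ssigned (v i), exists i, v i <> SZero &
      forall i, smulmxv A v i = smul g (v i)].

End Smax.

(* Main.v *)
Require Import Defs.
From mathcomp Require Import all_boot all_order all_algebra all_fingroup.
Set Implicit Arguments. Unset Strict Implicit. Unset Printing Implicit Defensive.
Import Order.TTheory GRing.Theory Num.Theory.
Local Open Scope ring_scope.

Section S.
Variable G : porderZmodType.
Hypothesis HG : div_tot_ord_group G.
Implicit Types x y z : G.
Implicit Types a b c : smax G.


Lemma totG x y : (x <= y) \/ (y <= x).
Proof. case: HG => h _ _; by case/orP: (h x y); auto. Qed.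

Lemma trich x y : [\/ x < y, x = y | y < x].
Proof.
case: (totG x y) => h.
  move: h; rewrite le_eqVlt => /orP[/eqP->|->]; by [apply: Or32|apply: Or31].
move: h; rewrite le_eqVlt => /orP[/eqP->|->]; by [apply: Or32|apply: Or33].
Qed.

Lemma addle x y z : x <= y -> x + z <= y + z.
Proof. case: HG => _ h _; exact: h. Qed.

Lemma addlt x y z : x < y -> x + z < y + z.
Proof.
rewrite !lt_neqAle => /andP[ne le]; rewrite addle // andbT.
by apply: contra ne => /eqP/addIr ->.
Qed.

Lemma addlt_l x y z : x < y -> z + x < z + y.
Proof. by rewrite ![z + _]addrC; apply: addlt. Qed.
Lemma addle_l x y z : x <= y -> z + x <= z + y.
Proof. by rewrite ![z + _]addrC; apply: addle. Qed.

Lemma addlt_canc x y z : x + z < y + z -> x < y.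
Proof. by move/(addlt (- z)); rewrite !addrK. Qed.
Lemma addle_canc x y z : x + z <= y + z -> x <= y.
Proof. by move/(addle (- z)); rewrite !addrK. Qed.

Lemma le_add x y z w : x <= y -> z <= w -> x + z <= y + w.
Proof. move=> h1 h2; apply: le_trans (addle _ h1) (addle_l _ h2). Qed.
Lemma lt_add x y z w : x < y -> z <= w -> x + z < y + w.
Proof. move=> h1 h2; apply: lt_le_trans (addlt _ h1) (addle_l _ h2). Qed.

Lemma nltle x y : ~~ (x < y) -> y <= x.
Proof. case: (trich x y) => [->//|->//|/ltW//]. Qed.


Definition mo a : G := match a with SZero => 0 | SPos x | SNeg x | SBal x => x end.
Definition sg a : bool := match a with SNeg _ => true | _ => false end.
Definition mk (b : bool) x : smax G := if b then SNeg x else SPos x.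
Lemma eqVneq_s a b : a = b \/ a <> b.
Proof.
case: a => [|x|x|x]; case: b => [|y|y|y]; try (by left); try (by right; discriminate);
case: (eqVneq x y) => [->|h]; try (by left); right; case=> e; move: h; by rewrite e eqxx.
Qed.
Definition agree a c := a = SZero \/ mo a < mo c \/ a = c.

Lemma lt_ifs x y (T : Type) (u v w : T) : x < y ->
  (if x < y then u else if y < x then v else w) = u.
Proof. by move=> ->. Qed.
Lemma gt_ifs x y (T : Type) (u v w : T) : y < x ->
  (if x < y then u else if y < x then v else w) = v.
Proof. by move=> h; rewrite (lt_gtF h) h. Qed.
Lemma eq_ifs x (T : Type) (u v w : T) :
  (if x < x then u else if x < x then v else w) = w.
Proof. by rewrite ltxx. Qed.

Ltac do_ifs := match goal with
 | |- context [if ?x < ?y then _ else _] =>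
   let h := fresh "h" in
   case: (trich x y) => [h|h|h];
   [rewrite h (lt_gtF h) | subst; rewrite ltxx | rewrite (lt_gtF h) h]
 | _ => idtac end.

Ltac sadd_cases a b :=
  case: a => [|?|?|?]; case: b => [|?|?|?]; rewrite /sadd /sadd_eq /=; do_ifs.

Lemma sadd0 a b : sadd a b = SZero -> a = SZero /\ b = SZero.
Proof. by sadd_cases a b. Qed.

Lemma sadd_nz_l a b : a <> SZero -> sadd a b <> SZero /\ mo a <= mo (sadd a b).
Proof. sadd_cases a b => //= _; split=> //; by [exact: lexx|exact: ltW]. Qed.

Lemma sadd_nz_r a b : b <> SZero -> sadd a b <> SZero /\ mo b <= mo (sadd a b).
Proof. sadd_cases a b => //= _; split=> //; by [exact: lexx|exact: ltW]. Qed.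

Lemma sadd_top a b : sadd a b <> SZero ->
  (a <> SZero /\ mo a = mo (sadd a b)) \/ (b <> SZero /\ mo b = mo (sadd a b)).
Proof.
sadd_cases a b => //= _;
first [left; split; [discriminate|reflexivity] | right; split; [discriminate|reflexivity]].
Qed.

Lemma sadd_agree a b : ssigned (sadd a b) -> sadd a b <> SZero ->
  [/\ agree a (sadd a b), agree b (sadd a b) & (a = sadd a b \/ b = sadd a b)].
Proof.
rewrite /agree; sadd_cases a b => //= _ _.
all: by split; auto.
Qed.

Lemma sadd0l b : sadd SZero b = b. Proof. by case: b. Qed.
Lemma sadd0r a : sadd a SZero = a. Proof. by case: a. Qed.
Lemma sadd_domr a b : a <> SZero -> mo b < mo a -> sadd a b = a.
Proof. by sadd_cases a b => //= _ h; move: h; rewrite ?ltxx // => /lt_gtF; rewrite ?h. Qed.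


Lemma sadd_doml a b : b <> SZero -> mo a < mo b -> sadd a b = b.
Proof. by sadd_cases a b => //= _ h; move: h; rewrite ?ltxx // => /lt_gtF; rewrite ?h. Qed.
Lemma sadd_idem c : ssigned c -> sadd c c = c.
Proof. by case: c => [|x|x|x] //= _; rewrite /sadd /sadd_eq ltxx. Qed.

Lemma agree_sadd a b c : ssigned c -> c <> SZero -> agree a c -> agree b c ->
  agree (sadd a b) c.
Proof.
move=> sc nc [->|[ha|->]] [->|[hb|->]]; rewrite ?sadd0l ?sadd0r.
- by left.
- by right; left.
- by right; right.
- by right; left.
- have [->|nz] := eqVneq_s (sadd a b) SZero; first by left.
  right; left; case: (sadd_top nz) => [[_ <-]|[_ <-]] //.
- by right; right; rewrite sadd_doml.
- by right; right.
- by right; right; rewrite sadd_domr.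
- by right; right; rewrite sadd_idem.
Qed.

Section Sums.
Variables (I : eqType) (F : I -> smax G).
Local Notation S r := (\big[@sadd G/SZero]_(j <- r) F j).

Lemma sum_zero r : (forall j, j \in r -> F j = SZero) -> S r = SZero.
Proof.
elim: r => [|x r IH] h; first by rewrite big_nil.
rewrite big_cons h ?mem_head // sadd0l IH // => j jr; apply: h; by rewrite in_cons jr orbT.
Qed.

Lemma sum_zero_inv r : S r = SZero -> forall j, j \in r -> F j = SZero.
Proof.
elim: r => [|x r IH] //; rewrite big_cons => /sadd0 [h1 h2] j; rewrite in_cons.
by case/orP => [/eqP->//|]; apply: IH.
Qed.

Lemma sum_mo r j : j \in r -> F j = SZero \/ (S r <> SZero /\ mo (F j) <= mo (S r)).
Proof.
elim: r => [|x r IH] //; rewrite in_cons big_cons.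
case/orP => [/eqP->|jr].
  have [->|nz] := eqVneq_s (F x) SZero; first by left.
  by right; apply: sadd_nz_l.
case: (IH jr) => [->|[nz le]]; first by left.
right; have [h1 h2] := sadd_nz_r (F x) nz; split=> //; exact: le_trans le h2.
Qed.

Lemma sum_top_ex r : S r <> SZero -> exists j, [/\ j \in r, F j <> SZero & mo (F j) = mo (S r)].
Proof.
elim: r => [|x r IH]; first by rewrite big_nil.
rewrite big_cons => nz; case: (sadd_top nz) => [[h1 h2]|[h1 h2]].
  by exists x; rewrite mem_head.
case: (IH h1) => j [jr h3 h4]; exists j; split=> //; first by rewrite in_cons jr orbT.
by rewrite h4.
Qed.

Lemma sum_agree r c : ssigned c -> c <> SZero -> S r = c ->
  forall j, j \in r -> agree (F j) c.
Proof.
move=> sc nc; elim: r c sc nc => [|x r IH] c sc nc //.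
rewrite big_cons => e j; rewrite in_cons; move: sc nc; rewrite -e => sc nc.
case: (sadd_agree sc nc) => h1 h2 _.
case/orP => [/eqP->//|jr].
case: h2 => [h2|[h2|h2]].
- by left; apply: (sum_zero_inv h2).
- case: (sum_mo jr) => [->|[_ le]]; first by left.
  by right; left; apply: le_lt_trans le h2.
- by apply: IH => //; rewrite -h2.
Qed.

Lemma sum_agree_all r c : ssigned c -> c <> SZero ->
  (forall j, j \in r -> agree (F j) c) -> agree (S r) c.
Proof.
move=> sc nc; elim: r => [|x r IH] h; first by rewrite big_nil; left.
rewrite big_cons; apply: agree_sadd => //; first by apply: h; rewrite mem_head.
by apply: IH => j jr; apply: h; rewrite in_cons jr orbT.
Qed.

Lemma sum_eq r c : ssigned c -> c <> SZero ->
  (forall j, j \in r -> agree (F j) c) -> (exists2 j, j \in r & F j = c) -> S r = c.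
Proof.
move=> sc nc; elim: r => [|x r IH] h [j]; first by [].
rewrite big_cons in_cons => /orP[/eqP->|jr] e.
  rewrite e; case: (sum_agree_all sc nc (r := r)) => [j' jr|->|[lt|->]].
  - by apply: h; rewrite in_cons jr orbT.
  - by rewrite sadd0r.
  - by rewrite sadd_domr.
  - by rewrite sadd_idem.
rewrite IH //; last by exists j.
  have: agree (F x) c by apply: h; rewrite mem_head.
  case=> [->|[lt|->]]; first by rewrite sadd0l.
  - by rewrite sadd_doml.
  - by rewrite sadd_idem.
by move=> j' jr'; apply: h; rewrite in_cons jr' orbT.
Qed.
End Sums.

Lemma smul_mk (b1 b2 : bool) x y : smul (mk b1 x) (mk b2 y) = mk (b1 (+) b2) (x + y).
Proof. by case: b1; case: b2. Qed.
Lemma mkE a : ssigned a -> a <> SZero -> a = mk (sg a) (mo a).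
Proof. by case: a. Qed.
Lemma mk_nz (b : bool) x : mk b x <> SZero. Proof. by case: b. Qed.
Lemma mk_signed (b : bool) x : ssigned (mk b x). Proof. by case: b. Qed.
Lemma mo_mk (b : bool) x : mo (mk b x) = x. Proof. by case: b. Qed.
Lemma sg_mk (b : bool) x : sg (mk b x) = b. Proof. by case: b. Qed.
Lemma smul0r a : smul SZero a = SZero. Proof. by case: a. Qed.
Lemma smulr0 a : smul a SZero = SZero. Proof. by case: a. Qed.
Lemma smul_eq0 a b : smul a b = SZero -> a = SZero \/ b = SZero.
Proof. by case: a => [|x|x|x]; case: b => [|y|y|y]; auto. Qed.
Lemma smul_signed a b : ssigned a -> ssigned b -> ssigned (smul a b).
Proof. by case: a => [|x|x|x]; case: b => [|y|y|y]. Qed.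
Lemma sopp_signed a : ssigned a -> ssigned (sopp a). Proof. by case: a. Qed.
Lemma sopp_nz a : a <> SZero -> sopp a <> SZero. Proof. by case: a. Qed.
Lemma mo_sopp a : mo (sopp a) = mo a. Proof. by case: a. Qed.
Lemma sg_sopp a : a <> SZero -> ssigned a -> sg (sopp a) = ~~ sg a. Proof. by case: a. Qed.

Section Prods.
Variables (I : eqType) (F : I -> smax G).
Local Notation P r := (\big[@smul G/@sone G]_(j <- r) F j).

Lemma prod_mk r : (forall j, j \in r -> ssigned (F j) /\ F j <> SZero) ->
  P r = mk (\big[addb/false]_(j <- r) sg (F j)) (\sum_(j <- r) mo (F j)).
Proof.
elim: r => [|x r IH] h; first by rewrite !big_nil.
rewrite !big_cons IH; last by move=> j jr; apply: h; rewrite in_cons jr orbT.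
case: (h x (mem_head _ _)) => sx nx; by rewrite {1}(mkE sx nx) smul_mk.
Qed.

Lemma prod_zero r : (exists2 j, j \in r & F j = SZero) -> P r = SZero.
Proof.
elim: r => [|x r IH] [j] //; rewrite big_cons in_cons => /orP[/eqP->|jr] e.
  by rewrite e smul0r.
by rewrite IH ?smulr0 //; exists j.
Qed.
End Prods.

Lemma ex_max_seq (T : eqType) (P : pred T) (f : T -> G) (r : seq T) :
  (exists2 x : T, x \in r & P x) ->
  exists x : T, [/\ x \in r, P x & forall y : T, y \in r -> P y -> f y <= f x].
Proof.
elim: r => [|a r IH] [x] //; rewrite in_cons => /orP[/eqP->|xr] Px.
  case: (boolP (has P r)) => [/hasP [y yr Py]|].
    case: (IH (ex_intro2 _ _ y yr Py)) => z [zr Pz hz].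
    case: (totG (f a) (f z)) => le.
      exists z; split=> //; first by rewrite in_cons zr orbT.
      by move=> w; rewrite in_cons => /orP[/eqP-> _ //|wr]; apply: hz.
    exists a; split=> //; first by rewrite mem_head.
    move=> w; rewrite in_cons => /orP[/eqP->|wr] Pw; [exact: lexx|].
    exact: le_trans (hz w wr Pw) le.
  move/hasPn=> hn; exists a; split=> //; first by rewrite mem_head.
  move=> w; rewrite in_cons => /orP[/eqP->|wr] Pw; [exact: lexx|].
  by move: (hn w wr); rewrite Pw.
case: (IH (ex_intro2 _ _ x xr Px)) => z [zr Pz hz].
case: (boolP (P a)) => Pa.
  case: (totG (f a) (f z)) => le.
    exists z; split=> //; first by rewrite in_cons zr orbT.
    by move=> w; rewrite in_cons => /orP[/eqP-> _ //|wr]; apply: hz.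
  exists a; split=> //; first by rewrite mem_head.
  move=> w; rewrite in_cons => /orP[/eqP->|wr] Pw; [exact: lexx|].
  exact: le_trans (hz w wr Pw) le.
exists z; split=> //; first by rewrite in_cons zr orbT.
move=> w; rewrite in_cons => /orP[/eqP->|wr] Pw; first by rewrite Pw in Pa.
exact: hz.
Qed.

Lemma ex_max (T : finType) (P : pred T) (f : T -> G) :
  (exists x : T, P x) -> exists x : T, P x /\ forall y : T, P y -> f y <= f x.
Proof.
case=> x Px; case: (@ex_max_seq T P f (enum T)) => [|z [_ Pz hz]].
  by exists x; rewrite ?mem_enum.
by exists z; split=> // y; apply: hz; rewrite mem_enum.
Qed.

Definition mvset (T : finType) (x0 : T) (s : {perm T}) :=
  [set k | (k != x0) && (s k != k)].

Lemma perm_fix1 (T : finType) (x0 : T) (s : {perm T}) :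
  (forall k, k != x0 -> s k = k) -> s = 1%g.
Proof.
move=> fix1.
have sx0 : s x0 = x0.
  apply/eqP; apply: contraT => h.
  by move/perm_inj: (fix1 _ h) => e'; rewrite e' eqxx in h.
by apply/permP => k; rewrite perm1; case: (eqVneq k x0) => [->|/fix1].
Qed.

Lemma odd_perm_mono (T : finType) (x0 : T) (phi : T -> G) (s : {perm T}) :
  (forall k, k != x0 -> s k != k -> phi k < phi (s k)) ->
  odd_perm s = \big[addb/false]_(k : T) ((k != x0) && (s k != k)).
Proof.
move: {2}#|mvset x0 s| (leqnn #|mvset x0 s|) => N; elim: N s => [|N IH] s.
  rewrite leqn0 => /eqP/cards0_eq e _.
  have fix1 k : k != x0 -> s k = k.
    move=> kx; apply/eqP; apply: contraT => h.
    have : k \in mvset x0 s by rewrite inE kx h.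
    by rewrite e inE.
  rewrite (perm_fix1 fix1) odd_perm1 big1 // => k _; by rewrite perm1 eqxx andbF.
move=> cardN mono.
case: (set_0Vmem (mvset x0 s)) => [e|[k0 k0in]].
  have fix1 k : k != x0 -> s k = k.
    move=> kx; apply/eqP; apply: contraT => h.
    have : k \in mvset x0 s by rewrite inE kx h.
    by rewrite e inE.
  rewrite (perm_fix1 fix1) odd_perm1 big1 // => k _; by rewrite perm1 eqxx andbF.
case: (@ex_max T [pred w | w \in mvset x0 s] phi) => [|k [kin kmax]]; first by exists k0.
move: (kin); rewrite /= inE => /andP[kx sk].
have skx0 : s k = x0.
  apply/eqP; apply: contraT => h.
  have ssk : s (s k) != s k by apply: contra sk => /eqP/perm_inj ->.
  have := kmax (s k); rewrite /= inE h ssk => /(_ isT) le.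
  by have := lt_le_trans (mono k kx sk) le; rewrite ltxx.
pose t := tperm k x0; pose s' := (s * t)%g.
have s'E w : s' w = t (s w) by rewrite permM.
have s'k : s' k = k by rewrite s'E skx0 /t tpermR.
have pw w : w != k -> ((w != x0) && (s' w != w)) = ((w != x0) && (s w != w)).
  move=> wk; case: (eqVneq w x0) => //= yx.
  rewrite s'E; case: (eqVneq (s w) k) => [->|syk].
    by rewrite /t tpermL eq_sym yx eq_sym wk.
  case: (eqVneq (s w) x0) => [e|syx].
    by move: wk; rewrite -skx0 in e; rewrite (perm_inj e) eqxx.
  by rewrite /t tpermD // eq_sym.
have mvE : mvset x0 s' = mvset x0 s :\ k.
  apply/setP => w; rewrite !inE; case: (eqVneq w k) => [->|wk] /=.
    by rewrite s'k eqxx andbF.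
  by rewrite pw.
have mono' : forall w, w != x0 -> s' w != w -> phi w < phi (s' w).
  move=> w yx sy; have wk : w != k by apply: contra sy => /eqP->; rewrite s'k.
  have := pw w wk; rewrite yx sy /= => /esym sy'.
  move: sy; rewrite s'E; case: (eqVneq (s w) k) => [e|syk].
    rewrite e /t tpermL => _.
    apply: lt_trans (mono w yx sy') _; rewrite e -skx0; exact: mono.
  case: (eqVneq (s w) x0) => [e|syx].
    by move: wk; rewrite -skx0 in e; rewrite (perm_inj e) eqxx.
  rewrite /t tpermD 1?eq_sym // => _; exact: mono.
have IH' := IH s'.
rewrite mvE in IH'; have := cardsD1 k (mvset x0 s); rewrite (kin : k \in mvset x0 s) add1n => ec.
rewrite ec ltnS in cardN; have {IH'}IH' := IH' cardN mono'.
have oddE : odd_perm s' = ~~ odd_perm s.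
  by rewrite odd_permM /t odd_tperm kx addbT.
rewrite (bigD1 k) //= kx sk /=.
have : odd_perm s = ~~ odd_perm s' by rewrite oddE negbK.
move=> ->; rewrite IH' (bigD1 k) //= s'k eqxx andbF /=.
congr (~~ _); apply: eq_bigr => w wk; exact: pw.
Qed.


Lemma spos_mo a : spositive a -> a = SPos (mo a). Proof. by case: a. Qed.
Lemma mk_inj (b1 b2 : bool) x1 x2 : mk b1 x1 = mk b2 x2 -> b1 = b2 /\ x1 = x2.
Proof. by move=> e; split; [rewrite -(sg_mk b1 x1) e sg_mk|rewrite -(mo_mk b1 x1) e mo_mk]. Qed.
Lemma slt_pos (p q : G) : slt (SPos p) (SPos q) -> p < q.
Proof.
rewrite /slt /=; rewrite /sadd /sadd_eq.
by case: (trich p q) => [h|<-|h]; [rewrite h|rewrite ltxx|rewrite (lt_gtF h) h].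
Qed.
Lemma spreceq_pos (p q : G) : spreceq (SPos p) (SPos q) -> p <= q.
Proof.
rewrite /spreceq /sadd /sadd_eq.
case: (trich p q) => [h|<-|h]; [by rewrite h => _; exact: ltW|by rewrite lexx|].
by rewrite (lt_gtF h) h => -[e]; rewrite e ltxx in h.
Qed.
Lemma addlt_canc_l x y z : z + x < z + y -> x < y.
Proof. by rewrite ![z + _]addrC; apply: addlt_canc. Qed.
Lemma lt_add2 x y z w : x < y -> z < w -> x + z < y + w.
Proof. by move=> h1 h2; apply: lt_add h1 (ltW h2). Qed.
Lemma lt_double x y : x + x < y + y -> x < y.
Proof.
move=> h; case: (trich x y) => [//|e|h']; first by rewrite e ltxx in h.
by have := lt_trans h (lt_add2 h' h'); rewrite ltxx.
Qed.
Lemma le_lt_contra x y : x <= y -> y < x -> False.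
Proof. by move=> h1 h2; have := le_lt_trans h1 h2; rewrite ltxx. Qed.

Lemma telesc n (i : 'I_n.+1) (s : 'S_n.+1) (f : 'I_n.+1 -> G) (c : G) :
  s ord0 = i ->
  \sum_(p < n) (c + f (lift ord0 p) - f (s (lift ord0 p))) = c *+ n + f i - f ord0.
Proof.
move=> s0.
have e1 : \sum_(k < n.+1) f k = f ord0 + \sum_(p < n) f (lift ord0 p) by rewrite big_ord_recl.
have e2 : \sum_(k < n.+1) f (s k) = f (s ord0) + \sum_(p < n) f (s (lift ord0 p)) by rewrite big_ord_recl.
have e3 : \sum_(k < n.+1) f k = \sum_(k < n.+1) f (s k) by rewrite (reindex_inj (@perm_inj _ s)).
rewrite -e3 s0 in e2.
rewrite big_split /= sumrN big_split /= sumr_const card_ord.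
have -> : \sum_(p < n) f (lift ord0 p) = \sum_(k < n.+1) f k - f ord0.
  by rewrite e1 addrC addKr.
have -> : \sum_(p < n) f (s (lift ord0 p)) = \sum_(k < n.+1) f k - f i.
  by rewrite e2 addrC addKr.
by rewrite opprB -!addrA; congr (_ + _); rewrite addrCA (addrCA (\sum_(k < n.+1) f k)) subrr addr0 addrC.
Qed.

Lemma telesc_b n (i : 'I_n.+1) (s : 'S_n.+1) (f : 'I_n.+1 -> bool) :
  s ord0 = i ->
  \big[addb/false]_(p < n) (f (lift ord0 p) (+) f (s (lift ord0 p))) = f ord0 (+) f i.
Proof.
move=> s0.
have e1 : \big[addb/false]_(k < n.+1) f k = f ord0 (+) \big[addb/false]_(p < n) f (lift ord0 p) by rewrite big_ord_recl.
have e2 : \big[addb/false]_(k < n.+1) f (s k) = f (s ord0) (+) \big[addb/false]_(p < n) f (s (lift ord0 p)) by rewrite big_ord_recl.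
have e3 : \big[addb/false]_(k < n.+1) f k = \big[addb/false]_(k < n.+1) f (s k) by rewrite (reindex_inj (@perm_inj _ s)).
rewrite -e3 s0 in e2.
rewrite big_split /=.
have -> : \big[addb/false]_(p < n) f (lift ord0 p) = \big[addb/false]_(k < n.+1) f k (+) f ord0.
  by rewrite e1 addbC addbA addbb.
have -> : \big[addb/false]_(p < n) f (s (lift ord0 p)) = \big[addb/false]_(k < n.+1) f k (+) f i.
  by rewrite e2 addbC addbA addbb.
by rewrite addbACA addbb.
Qed.

Lemma perm_closure (T : finType) (s : {perm T}) (P : pred T) :
  (forall k, P k -> P (s k)) -> forall k, P (s k) -> P k.
Proof.
move=> cl k Psk; pose Z := [set w | P w].
have sub : s @: Z \subset Z.
  by apply/subsetP => w /imsetP [y]; rewrite !inE => Py ->; apply: cl.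
have eZ : s @: Z = Z.
  by apply/eqP; rewrite eqEcard sub card_imset //=; apply: perm_inj.
have : s k \in s @: Z by rewrite eZ inE.
case/imsetP => y; rewrite inE => Py /perm_inj ->; exact: Py.
Qed.

Lemma lift_perm_surj n (i : 'I_n.+1) (s : 'S_n.+1) :
  s ord0 = i -> exists sig : 'S_n, lift_perm ord0 i sig = s.
Proof.
move=> s0.
have ne p : s (lift ord0 p) != i.
  by rewrite -s0 (inj_eq perm_inj) eq_sym neq_lift.
pose f p := odflt p (unlift i (s (lift ord0 p))).
have fE p : lift i (f p) = s (lift ord0 p).
  rewrite /f; case: unliftP => [q ->|e] //=.
  by move: (ne p); rewrite e eqxx.
have finj : injective f.
  move=> p q e; apply: (@lift_inj _ ord0); apply: (@perm_inj _ s).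
  by rewrite -!fE e.
exists (perm finj); apply/permP => k; case: (unliftP ord0 k) => [p ->|->].
  by rewrite lift_perm_lift permE fE.
by rewrite lift_perm_id s0.
Qed.

Lemma sum_le n (f h : 'I_n -> G) : (forall p, f p <= h p) ->
  \sum_(p < n) f p <= \sum_(p < n) h p.
Proof.
move=> le; elim/big_rec2: _ => [|j a b _ hab]; first exact: lexx.
exact: le_add.
Qed.

Lemma sum_lt n (f h : 'I_n -> G) : (forall p, f p <= h p) -> (exists p, f p < h p) ->
  \sum_(p < n) f p < \sum_(p < n) h p.
Proof.
move=> le [p lt]; rewrite (bigD1 p) //= [X in _ < X](bigD1 p) //=.
apply: lt_add lt _; elim/big_rec2: _ => [|j a b _ hab]; first exact: lexx.
exact: le_add.
Qed.

Lemma ssignpowE (b : bool) : @ssignpow G (nat_of_bool b) = mk b 0.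
Proof. by rewrite /ssignpow oddb; case: b. Qed.

Section Main.
Variables (n : nat) (A : 'M[smax G]_n.+1) (v : 'I_n.+1 -> smax G).
Hypothesis HT : TPD A.
Hypothesis Hord : forall i j : 'I_n.+1, (i <= j)%N -> spreceq (A j j) (A i i).
Hypothesis Hsucc : forall i : 'I_n.+1, nat_of_ord i = 1%N -> ssucc (A ord0 ord0) (A i i).
Hypothesis Hev : strong_eigenvector A (A ord0 ord0) v.

Local Notation g := (mo (A ord0 ord0)).
Local Notation d k := (mo (A k k)).
Local Notation xx k := (mo (v k)).
Local Notation bb k := (sg (v k)).

Lemma Asigned k j : ssigned (A k j). Proof. by case: HT. Qed.
Lemma vsigned k : ssigned (v k). Proof. by case: Hev. Qed.

Lemma Adiag k : A k k = SPos (d k).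
Proof.
case: HT => _ _ h _; apply: spos_mo; move: (h k); rewrite /slt /=.
by case: (A k k).
Qed.

Lemma dlt k : k != ord0 -> d k < g.
Proof.
move=> k0; have h1 : (1 < n.+1)%N.
  by case: k k0 => [[|m] lt] //= _; apply: leq_ltn_trans lt.
pose one := Ordinal h1.
have le1 : d k <= d one.
  have := @Hord one k; rewrite /= lt0n k0 => /(_ isT).
  by rewrite (Adiag k) (Adiag one); apply: spreceq_pos.
case: (@Hsucc one erefl) => h2 h3.
have le2 : d one <= g by move: h2; rewrite (Adiag one) (Adiag ord0); apply: spreceq_pos.
apply: le_lt_trans le1 _; rewrite lt_neqAle le2 andbT; apply/eqP => e.
by apply: h3; rewrite (Adiag one) (Adiag ord0) e.
Qed.

Lemma offd k j : k != j -> A k j <> SZero -> mo (A k j) + mo (A k j) < d k + d j.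
Proof.
move=> kj nz; case: HT => _ _ _ /(_ k j kj).
rewrite {1 2}(mkE (Asigned k j) nz) smul_mk addbb (Adiag k) (Adiag j) /=.
exact: slt_pos.
Qed.

Lemma offg k j : k != ord0 -> j != ord0 -> k != j -> A k j <> SZero -> mo (A k j) < g.
Proof.
move=> k0 j0 kj nz; apply: lt_double; apply: lt_trans (offd kj nz) _.
exact: lt_add2 (dlt k0) (dlt j0).
Qed.

Lemma gpos : A ord0 ord0 = SPos g. Proof. exact: Adiag. Qed.

Lemma rowE k : \big[@sadd G/SZero]_(j <- index_enum 'I_n.+1) smul (A k j) (v j)
   = smul (A ord0 ord0) (v k).
Proof. by case: Hev => _ _ /(_ k). Qed.

Lemma E1 k j : v k = SZero -> smul (A k j) (v j) = SZero.
Proof.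
move=> vk; have := rowE k; rewrite vk smulr0 => h.
exact: (sum_zero_inv h (mem_index_enum j)).
Qed.

Definition isz (a : smax G) : bool := if a is SZero then true else false.
Lemma iszP a : reflect (a = SZero) (isz a). Proof. by case: a; constructor. Qed.

Lemma rowc k : v k <> SZero -> smul (A ord0 ord0) (v k) = mk (bb k) (g + xx k).
Proof.
move=> nz; rewrite gpos {1}(mkE (vsigned k) nz).
by rewrite -[SPos g]/(mk false g) smul_mk.
Qed.

Lemma termE k j : A k j <> SZero -> v j <> SZero ->
  smul (A k j) (v j) = mk (sg (A k j) (+) bb j) (mo (A k j) + xx j).
Proof.
by move=> h1 h2; rewrite {1}(mkE (Asigned k j) h1) {1}(mkE (vsigned j) h2) smul_mk.
Qed.

Lemma E2 k j : v k <> SZero -> v j <> SZero -> A k j <> SZero ->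
  mo (A k j) + xx j < g + xx k \/
  (mo (A k j) + xx j = g + xx k /\ sg (A k j) (+) bb j = bb k).
Proof.
move=> vk vj ak; have := rowE k; rewrite rowc // => h.
have := sum_agree (mk_signed _ _) (@mk_nz _ _) h (mem_index_enum j).
rewrite termE // /agree !mo_mk.
case=> [/mk_nz//|[lt|/mk_inj [e1 e2]]]; first by left.
by right.
Qed.

Definition tight k j := [/\ v k <> SZero, v j <> SZero, A k j <> SZero, k != j &
  mo (A k j) + xx j = g + xx k].

Lemma E3 k : k != ord0 -> v k <> SZero -> exists j, tight k j.
Proof.
move=> k0 vk; have := rowE k; rewrite rowc // => h.
have : \big[@sadd G/SZero]_(j <- index_enum 'I_n.+1) smul (A k j) (v j) <> SZero.
  by rewrite h; apply: mk_nz.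
case/sum_top_ex => j [_ nz]; rewrite h mo_mk => e.
have ak : A k j <> SZero by move=> e'; apply: nz; rewrite e' smul0r.
have vj : v j <> SZero by move=> e'; apply: nz; rewrite e' smulr0.
move: e; rewrite termE // mo_mk => e.
exists j; split=> //; apply/eqP => kj; move: e; rewrite -kj Adiag /= => e.
have := addlt (xx k) (dlt k0); rewrite -e ltxx //.
Qed.

Definition phi k := d k + (xx k + xx k).

Lemma tight_phi k j : k != ord0 -> tight k j -> phi k < phi j.
Proof.
move=> k0 [vk vj ak kj e]; rewrite /phi.
have h1 := addlt (xx j + xx j) (offd kj ak).
rewrite addrACA e addrACA in h1.
have h2 := addlt (xx k + xx k) (lt_add2 (dlt k0) (dlt k0)).
have := lt_trans h2 h1; rewrite -!addrA; exact: addlt_canc_l.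
Qed.

Lemma v0nz : v ord0 <> SZero.
Proof.
case: Hev => _ [i0 nz] _.
case: (@ex_max _ [pred k | ~~ isz (v k)] phi) => [|k [/= Pk kmax]].
  by exists i0; apply/negP => /iszP.
have vk : v k <> SZero by move=> e; rewrite e in Pk.
case: (eqVneq k ord0) => [<-//|k0].
case: (E3 k0 vk) => j tj; have := tight_phi k0 tj.
case: tj => _ vj _ _ _.
have := kmax j; rewrite /= => /(_ (introN (iszP _) vj)) le lt.
by case: (le_lt_contra le lt).
Qed.

Lemma claim_gen N k : (#|[set p | (phi k < phi p)%R]| < N)%N -> k != ord0 -> v k <> SZero ->
  exists s : 'S_n.+1, s ord0 = k /\
   forall p, p != ord0 -> s p != p -> tight p (s p) /\ phi k <= phi p.
Proof.
elim: N k => [//|N IH] k cN k0 vk.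
case: (E3 k0 vk) => j tj; have lt := tight_phi k0 tj.
case: (eqVneq j ord0) => [j0|j0].
  exists (tperm ord0 k); split; first by rewrite tpermL.
  move=> p p0 sp; case: (eqVneq p k) => [->|pk]; last by rewrite tpermD 1?eq_sym // eqxx in sp.
  by rewrite tpermR -j0; split=> //; apply: lexx.
have vj : v j <> SZero by case: tj.
have cj : (#|[set p | (phi j < phi p)%R]| < N)%N.
  apply: (@leq_trans #|[set p | (phi k < phi p)%R]|); last by rewrite -ltnS.
  apply: proper_card; apply/properP; split.
    by apply/subsetP => p; rewrite !inE => h; apply: lt_trans lt h.
  by exists j; rewrite !inE ?ltxx.
case: (IH j cj j0 vj) => sj [sj0 hj].
have sjk : sj k = k.
  apply/eqP; apply: contraT => h; have [_ le] := hj k k0 h.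
  by case: (le_lt_contra le lt).
exists (tperm ord0 k * sj)%g; split; first by rewrite permM tpermL.
move=> p p0; rewrite permM; case: (eqVneq p k) => [->|pk].
  by rewrite tpermR sj0 => _; split=> //; apply: lexx.
have np0 : ord0 != p by rewrite eq_sym.
have nkp : k != p by rewrite eq_sym.
rewrite (tpermD np0 nkp) => sp; have [t1 t2] := hj p p0 sp; split=> //.
exact: ltW (lt_le_trans lt t2).
Qed.

Lemma claim k : k != ord0 -> v k <> SZero ->
  exists s : 'S_n.+1, s ord0 = k /\
   forall p, p != ord0 -> s p != p -> tight p (s p) /\ phi k <= phi p.
Proof. exact: claim_gen. Qed.


Definition Mx := sshift (A ord0 ord0) A.

Lemma Mdiag k : k != ord0 -> Mx k k = SPos g.
Proof.
move=> k0; rewrite /Mx /sshift mxE eqxx (Adiag k) gpos /=.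
have := dlt k0; rewrite /sadd /sadd_eq => h.
by rewrite (lt_gtF h) h.
Qed.

Lemma Moff k j : k != j -> Mx k j = sopp (A k j).
Proof. by move=> kj; rewrite /Mx /sshift mxE (negPf kj) sadd0l. Qed.

Lemma Msigned k j : k != ord0 -> ssigned (Mx k j).
Proof.
move=> k0; case: (eqVneq k j) => [<-|kj]; first by rewrite Mdiag.
by rewrite Moff //; apply: sopp_signed; apply: Asigned.
Qed.

Lemma NmE (i : 'I_n.+1) (p q : 'I_n) : row' ord0 (col' i Mx) p q = Mx (lift ord0 p) (lift i q).
Proof. by rewrite !mxE. Qed.

Lemma sdetE (i : 'I_n.+1) : sdet (row' ord0 (col' i Mx)) =
  \big[@sadd G/SZero]_(sig : 'S_n)
     smul (@ssignpow G (odd_perm sig))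
       (\big[@smul G/@sone G]_(p < n) Mx (lift ord0 p) (lift_perm ord0 i sig (lift ord0 p))).
Proof.
rewrite /sdet; apply: eq_bigr => sig _; congr smul; apply: eq_bigr => p _.
by rewrite NmE lift_perm_lift.
Qed.

Section Det.
Variable i : 'I_n.+1.

Local Notation sL sig := (lift_perm ord0 i sig).
Definition fct (sig : 'S_n) p := Mx (lift ord0 p) (sL sig (lift ord0 p)).
Definition term (sig : 'S_n) :=
  smul (@ssignpow G (odd_perm sig)) (\big[@smul G/@sone G]_(p < n) fct sig p).

Lemma lift0_neq (p : 'I_n) : lift ord0 p != ord0.
Proof. by rewrite eq_sym neq_lift. Qed.

Lemma fct_signed sig p : ssigned (fct sig p).
Proof. exact: Msigned (lift0_neq p). Qed.

Lemma term_zero sig : (exists p, fct sig p = SZero) -> term sig = SZero.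
Proof.
case=> p e; rewrite /term prod_zero ?smulr0 //.
by exists p; rewrite ?mem_index_enum.
Qed.

Lemma cl_step sig : (forall p, fct sig p <> SZero) ->
  forall k, isz (v k) -> isz (v (sL sig k)).
Proof.
move=> nz k /iszP vk.
case: (unliftP ord0 k) => [p ek|ek]; last by rewrite ek in vk; case: (v0nz vk).
have := nz p; rewrite /fct -ek => nzk.
case: (eqVneq (sL sig k) k) => [->|ne]; first by apply/iszP.
move: nzk; rewrite Moff 1?eq_sym // => nzA.
have nA : A k (sL sig k) <> SZero by move=> e; apply: nzA; rewrite e.
case: (smul_eq0 (E1 (sL sig k) vk)) => // -> //.
Qed.

Lemma cl_back sig : (forall p, fct sig p <> SZero) ->
  forall k, isz (v (sL sig k)) -> isz (v k).
Proof. by move=> nz; apply: perm_closure; apply: cl_step. Qed.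

Definition bnd (s : 'S_n.+1) k := g + xx k - xx (s k).

Lemma bound_step sig k : k != ord0 -> (forall p, fct sig p <> SZero) ->
  mo (Mx k (sL sig k)) < bnd (sL sig) k \/
  (mo (Mx k (sL sig k)) = bnd (sL sig) k /\ (sL sig k = k \/ tight k (sL sig k))).
Proof.
move=> k0 nz; rewrite /bnd.
have nzk : Mx k (sL sig k) <> SZero.
  case: (unliftP ord0 k) k0 => [p -> _|->]; [exact: nz p|by rewrite eqxx].
case: (eqVneq (sL sig k) k) => [e|ne].
  by right; rewrite e Mdiag // addrK; split=> //; left.
move: nzk; rewrite Moff 1?eq_sym // mo_sopp => nzA.
have nA : A k (sL sig k) <> SZero by move=> e; apply: nzA; rewrite e.
case: (boolP (isz (v k))) => [zk|nzv].
  have zsk := cl_step nz zk.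
  rewrite (elimT (iszP _) zk) (elimT (iszP _) zsk) /= subr0 addr0.
  left; apply: offg => //; last by rewrite eq_sym.
  by apply/eqP => e; move: zsk; rewrite e => /iszP /v0nz.
have vk : v k <> SZero by move=> e; rewrite e in nzv.
have vsk : v (sL sig k) <> SZero.
  by move=> e; have := cl_back nz (k := k); rewrite e /= => /(_ isT); apply/negP.
case: (E2 vk vsk nA) => [lt|[e _]].
  by left; have := addlt (- xx (sL sig k)) lt; rewrite addrK.
by right; rewrite -e addrK; split=> //; right; split=> //; rewrite eq_sym.
Qed.

Definition W := g *+ n + xx i - xx ord0.
Definition T := mk (odd i (+) (bb ord0 (+) bb i)) W.

Definition top (s : 'S_n.+1) := forall k, k != ord0 -> s k = k \/ tight k (s k).

Lemma top_term sig : top (sL sig) -> term sig = T.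
Proof.
move=> tp; set s := sL sig.
have s0 : s ord0 = i by rewrite /s lift_perm_id.
have fk p : fct sig p = Mx (lift ord0 p) (s (lift ord0 p)) by [].
have info p : [/\ ssigned (fct sig p), fct sig p <> SZero,
    mo (fct sig p) = bnd s (lift ord0 p) &
    sg (fct sig p) = (s (lift ord0 p) != lift ord0 p) (+) (bb (lift ord0 p) (+) bb (s (lift ord0 p)))].
  rewrite fk /bnd; set k := lift ord0 p; have k0 : k != ord0 := lift0_neq p.
  split; first exact: Msigned.
  - case: (tp k k0) => [->|[_ _ nA kj _]]; first by rewrite Mdiag.
    by rewrite Moff //; apply: sopp_nz.
  - case: (tp k k0) => [->|[_ _ nA kj e]]; first by rewrite Mdiag // addrK.
    by rewrite Moff // mo_sopp -e addrK.
  - case: (tp k k0) => [->|[vk vj nA kj e]]; first by rewrite Mdiag // eqxx addbb.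
    rewrite Moff // sg_sopp //; last exact: Asigned.
    rewrite eq_sym kj addTb; case: (E2 vk vj nA) => [lt|[_ e2]].
      by move: lt; rewrite e ltxx.
    by rewrite -e2 -addbA addbb addbF.
rewrite /term prod_mk; last by move=> p _; case: (info p).
rewrite ssignpowE smul_mk add0r.
have -> : \sum_(p <- index_enum 'I_n) mo (fct sig p) = W.
  rewrite /W -(telesc (fun k => xx k) g s0); apply: eq_bigr => p _; by case: (info p).
have -> : \big[addb/false]_(p <- index_enum 'I_n) sg (fct sig p) =
   \big[addb/false]_(p < n) (s (lift ord0 p) != lift ord0 p) (+) (bb ord0 (+) bb i).
  rewrite -(telesc_b (fun k => bb k) s0) -big_split /=.
  by apply: eq_bigr => p _; case: (info p).
have oddE : odd_perm sig = odd i (+) odd_perm s.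
  by rewrite /s odd_lift_perm /= addbA addbb.
have mono : forall k, k != ord0 -> s k != k -> phi k < phi (s k).
  move=> k k0 sk; case: (tp k k0) => [e|tk]; first by rewrite e eqxx in sk.
  exact: tight_phi.
have := odd_perm_mono mono; rewrite big_ord_recl eqxx /= => oddS.
rewrite oddE oddS /T; congr mk.
by rewrite -addbA (addbA (\big[addb/false]_(p < n) _)) addbb addFb.
Qed.


Lemma term_mk sig : (forall p, fct sig p <> SZero) ->
  term sig = mk (odd_perm sig (+) \big[addb/false]_(p <- index_enum 'I_n) sg (fct sig p))
                (\sum_(p <- index_enum 'I_n) mo (fct sig p)).
Proof.
move=> nz; rewrite /term prod_mk ?ssignpowE ?smul_mk ?add0r //.
by move=> p _; split; [apply: fct_signed|apply: nz].
Qed.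

Lemma term_agree sig : agree (term sig) T.
Proof.
case: (boolP [exists p, isz (fct sig p)]) => [/existsP [p /iszP e]|/existsPn nz'].
  by left; apply: term_zero; exists p.
have nz p : fct sig p <> SZero by move=> e; move: (nz' p); rewrite e.
have s0 : sL sig ord0 = i by rewrite lift_perm_id.
have le p : mo (fct sig p) <= bnd (sL sig) (lift ord0 p).
  case: (bound_step (lift0_neq p) nz) => [/ltW //|[e _]]; rewrite /fct e; exact: lexx.
case: (boolP [exists p, mo (fct sig p) < bnd (sL sig) (lift ord0 p)]) => [/existsP [p lt]|/existsPn nlt].
  right; left; rewrite term_mk // /T !mo_mk /W -(telesc (fun k => xx k) g s0).
  by apply: sum_lt => //; exists p.
right; right; apply: top_term => k k0.
case: (unliftP ord0 k) k0 => [p ->|->]; last by rewrite eqxx.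
move=> _; case: (bound_step (lift0_neq p) nz) => [lt|[_ h]] //.
by move: (nlt p); rewrite lt.
Qed.

Lemma ex_top : v i <> SZero -> exists sig, top (sL sig).
Proof.
move=> vi; case: (eqVneq i ord0) => [e|i0].
  exists 1%g; rewrite e lift_perm1 => k _; left; exact: perm1.
case: (claim i0 vi) => s [s0 hs].
case: (lift_perm_surj s0) => sig e; exists sig; rewrite e => k k0.
case: (eqVneq (s k) k) => [->|ne]; first by left.
by right; case: (hs k k0 ne).
Qed.

Lemma det_signed : ssigned (sdet (row' ord0 (col' i Mx))).
Proof.
have -> : sdet (row' ord0 (col' i Mx)) = \big[@sadd G/SZero]_(sig : 'S_n) term sig.
  by rewrite sdetE.
case: (boolP (isz (v i))) => [zi|nzi].
  rewrite sum_zero // => sig _; apply: term_zero.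
  case: (boolP [exists p, isz (fct sig p)]) => [/existsP [p /iszP e]|/existsPn nz']; first by exists p.
  have nz p : fct sig p <> SZero by move=> e; move: (nz' p); rewrite e.
  have := cl_back nz (k := ord0); rewrite lift_perm_id zi => /(_ isT) /iszP /v0nz [].
have vi : v i <> SZero by move=> e; rewrite e in nzi.
rewrite (@sum_eq _ _ _ T) //; try exact: mk_signed.
- exact: mk_nz.
- by move=> sig _; apply: term_agree.
case: (ex_top vi) => sig tp; exists sig; first by rewrite mem_index_enum.
exact: top_term.
Qed.

End Det.

End Main.

End S.

Unset Implicit Arguments.

Theorem corollary5p20 (G : porderZmodType) (HG : div_tot_ord_group G)
    (n : nat) (A : 'M[smax G]_n.+1) :
  TPD A ->
  (forall i j : 'I_n.+1, (i <= j)%N -> spreceq (A j j) (A i i)) ->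
  (forall i : 'I_n.+1, nat_of_ord i = 1%N -> ssucc (A ord0 ord0) (A i i)) ->
  ~ (forall i : 'I_n.+1, ssigned (sadj (sshift (A ord0 ord0) A) i ord0)) ->
  ~ (exists v : 'I_n.+1 -> smax G, strong_eigenvector A (A ord0 ord0) v).
Proof.
move=> HT Hord Hsucc Hns [v Hev]; apply: Hns => i.
rewrite mxE; apply: smul_signed.
  by rewrite /ssignpow; case: (odd _).
exact: (det_signed HG HT Hord Hsucc Hev i).
Qed.
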